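(* Let $a,b,c,d\in R_\omega-\mathbb{F}_q$ be such that $ad-bc=1$ and $|a|_\omega\ge|b|_\omega$. Then $|c|_\omega\ge|d|_\omega$.
   Context: $\mathbb{F}_q$ is a finite field of order $q$, $K$ is the function field of a geometrically connected smooth projective curve $\mathbf C$ over $\mathbb{F}_q$, $\omega$ is a normalized discrete valuation of $K$ (corresponding to a closed point of $\mathbf C$), $K_\omega$ is the completion of $K$ at $\omega$, $q_\omega$ is the order of the residue field of $\omega$, and $|x|_\omega=q_\omega^{-\omega(x)}$. $R_\omega$ is the ring of elements of $K$ whose only poles are at the closed point $\omega$ (the affine coordinate ring of $\mathbf C-\{\omega\}$). *)

(* Defs.v *)
From HB Require Import structures.
From mathcomp Require Import all_boot all_order all_algebra all_field.
Set Implicit Arguments. Unset Strict Implicit. Unset Printing Implicit Defensive.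
Import Order.TTheory GRing.Theory Num.Theory.
Local Open Scope ring_scope.

(* Setting: F = F_q a finite field, K a field, iota : F -> K the structure
   map making K an F-algebra; the constants F_q inside K are the image of iota. *)

(* K is the function field of a geometrically connected smooth projective
   curve over F: K is finitely generated of transcendence degree 1 over F
   (there is t transcendental over F with K a finite-dimensional F(t)-vector
   space) and F is algebraically closed in K (geometric connectedness). *)
Definition is_function_field (F : finFieldType) (K : fieldType)
    (iota : {rmorphism F -> K}) : Prop :=
  (forall x : K, (exists p : {poly F}, p != 0 /\ root (map_poly iota p) x) ->
     exists c : F, x = iota c) /\
  (exists t : K,
     (forall p : {poly F}, (map_poly iota p).[t] = 0 -> p = 0) /\
     exists s : seq K, forall x : K,
       exists (num den : 'I_(size s) -> {poly F}),
         (forall i, (map_poly iota (den i)).[t] != 0) /\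
         x = \sum_(i < size s)
               ((map_poly iota (num i)).[t] / (map_poly iota (den i)).[t]) * s`_i).

(* Normalized discrete valuation of K trivial on F_q (= closed point of the
   curve).  The value at 0 (formally +oo) is irrelevant and unconstrained. *)
Definition is_place (F : finFieldType) (K : fieldType)
    (iota : {rmorphism F -> K}) (v : K -> int) : Prop :=
  (forall x y : K, x != 0 -> y != 0 -> v (x * y) = v x + v y) /\
  (forall x y : K, x != 0 -> y != 0 -> x + y != 0 ->
     Num.min (v x) (v y) <= v (x + y)) /\
  (forall c : F, c != 0 -> v (iota c) = 0) /\
  (forall n : int, exists x : K, x != 0 /\ v x = n).

Definition val_ring (K : fieldType) (w : K -> int) (y : K) : Prop :=
  y = 0 \/ 0 <= w y.
Definition val_ideal (K : fieldType) (w : K -> int) (y : K) : Prop :=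
  y = 0 \/ 0 < w y.

Definition residue_card (K : fieldType) (w : K -> int) (n : nat) : Prop :=
  exists s : seq K,
    size s = n /\
    (forall i, (i < n)%N -> val_ring w s`_i) /\
    (forall i j, (i < n)%N -> (j < n)%N -> i != j -> ~ val_ideal w (s`_i - s`_j)) /\
    (forall y, val_ring w y -> exists2 i, (i < n)%N & val_ideal w (y - s`_i)).

Definition absv (K : fieldType) (w : K -> int) (qw : nat) (x : K) : rat :=
  if x == 0 then 0 else (qw%:R : rat) ^ (- w x).

(* R_w: elements of K whose only poles are at (the place of) w, i.e.
   v x >= 0 for every place v distinct from w. *)
Definition in_Rw (F : finFieldType) (K : fieldType)
    (iota : {rmorphism F -> K}) (w : K -> int) (x : K) : Prop :=
  x = 0 \/
  forall v : K -> int, is_place iota v ->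
    (exists y : K, y != 0 /\ v y != w y) -> 0 <= v x.

Definition in_Rw_nonconst (F : finFieldType) (K : fieldType)
    (iota : {rmorphism F -> K}) (w : K -> int) (x : K) : Prop :=
  in_Rw iota w x /\ ~ (exists c : F, x = iota c).

(* Main.v *)
Require Import Defs.
From HB Require Import structures.
From mathcomp Require Import all_boot all_order all_algebra all_field.
From mathcomp Require Import zify ring.
From mathcomp Require Import boolp classical_sets.
Import Order.TTheory GRing.Theory Num.Theory.
Local Open Scope ring_scope.

Set Implicit Arguments. Unset Strict Implicit. Unset Printing Implicit Defensive.

Module M1.
Section FD.
Variables (F : finFieldType) (K : fieldType) (iota : {rmorphism F -> K}).
Definition ev (p : {poly F}) (z : K) := (map_poly iota p).[z].

Lemma evM p q z : ev (p * q) z = ev p z * ev q z.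
Proof. by rewrite /ev rmorphM hornerM. Qed.
Lemma evD p q z : ev (p + q) z = ev p z + ev q z.
Proof. by rewrite /ev rmorphD hornerD. Qed.
Lemma ev0 z : ev 0 z = 0.
Proof. by rewrite /ev rmorph0 horner0. Qed.
Lemma ev1 z : ev 1 z = 1.
Proof. by rewrite /ev rmorph1 hornerC. Qed.
Lemma ev_exp p n z : ev (p ^+ n) z = ev p z ^+ n.
Proof. by rewrite /ev rmorphXn horner_exp. Qed.
Lemma ev_sum (I : finType) (P : pred I) (f : I -> {poly F}) z :
  ev (\sum_(i | P i) f i) z = \sum_(i | P i) ev (f i) z.
Proof. by rewrite /ev rmorph_sum horner_sum. Qed.
Lemma ev_prod (I : finType) (P : pred I) (f : I -> {poly F}) z :
  ev (\prod_(i | P i) f i) z = \prod_(i | P i) ev (f i) z.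
Proof. by rewrite /ev rmorph_prod horner_prod. Qed.

Variables (t : K) (s : seq K).
Hypothesis Ht : forall p : {poly F}, ev p t = 0 -> p = 0.
Hypothesis Hs : forall x : K,
       exists (num den : 'I_(size s) -> {poly F}),
         (forall i, (map_poly iota (den i)).[t] != 0) /\
         x = \sum_(i < size s)
               ((map_poly iota (num i)).[t] / (map_poly iota (den i)).[t]) * s`_i.

Lemma clear_den x : exists (D : {poly F}) (c : 'I_(size s) -> {poly F}),
  D != 0 /\ ev D t * x = \sum_(i < size s) ev (c i) t * s`_i.
Proof.
have [num [den [hd ->]]] := Hs x.
exists (\prod_i den i), (fun i => num i * \prod_(j | j != i) den j); split.
  rewrite prodf_seq_neq0; apply/allP => i _ /=; apply/eqP => h.
  by move: (hd i); rewrite h rmorph0 horner0 eqxx.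
rewrite mulr_sumr; apply: eq_bigr => i _.
rewrite mulrA; congr (_ * _).
rewrite evM !ev_prod (bigD1 i) //= /ev.
have := hd i; set a := (map_poly _ (den i)).[t]; set b := \prod_(_ | _) _.
by move=> ha; field.
Qed.

Lemma FD (zs : 'I_(size s).+1 -> K) :
  exists g : 'I_(size s).+1 -> {poly F},
    (exists i, g i != 0) /\ \sum_i ev (g i) t * zs i = 0.
Proof.
set m := size s.
have [Dc HDc] := fin_all_exists (fun j => clear_den (zs j)).
have [D Hc] := fin_all_exists HDc.
pose cf j (i : 'I_m.+1) := if insub (val i) is Some k then D j k else 0.
pose A := \matrix_(j, i) cf j i.
have detA : \det A == 0.
  rewrite (expand_det_col _ ord_max) big1 // => i _.
  by rewrite mxE /cf insubN ?mul0r // -leqNgt leqnn.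
have [v v0 vA] := det0P detA.
exists (fun j => v 0 j * Dc j); split.
  have [j vj] : exists j, v 0 j != 0.
    apply/existsP; apply: contraNT v0; rewrite negb_exists => /forallP h.
    by apply/eqP/rowP => j; rewrite mxE; apply/eqP; move: (h j); rewrite negbK.
  by exists j; rewrite mulf_neq0 // (proj1 (Hc j)).
under eq_bigr => j _ do rewrite evM -mulrA (proj2 (Hc j)) mulr_sumr.
rewrite exchange_big /=; apply: big1 => i _.
under eq_bigr => j _ do rewrite mulrA.
rewrite -mulr_suml; apply/eqP; rewrite mulf_eq0; apply/orP; left.
under eq_bigr => j _ do rewrite -evM.
rewrite -ev_sum.
have := congr1 (fun M : 'M[{poly F}]_(1, m.+1) => M 0 (widen_ord (leqnSn m) i)) vA.
rewrite !mxE => h.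
suff -> : \sum_j v 0 j * D j i = 0 by rewrite ev0.
apply: (etrans _ h); apply: eq_bigr => j _.
rewrite !mxE /cf insubT //= => ?.
by congr (_ * D j _); apply: val_inj.
Qed.
End FD.



End M1.
Import M1.

Module M2.
Section Zorn.
Local Open Scope classical_set_scope.
Variables (F : finFieldType) (K : fieldType) (iota : {rmorphism F -> K}).
Variables (x y : K).
Hypothesis Hb : forall g, ev iota g y <> x.

Definition good (S : set K) :=
  [/\ (forall g, S (ev iota g y)), (forall a b, S a -> S b -> S (a + b)),
      (forall a, S a -> S (- a)), (forall a b, S a -> S b -> S (a * b)) & ~ S x].

Lemma base_good : good (fun z => exists g, z = ev iota g y).
Proof.
split.
- by move=> g; exists g.
- by move=> _ _ [g ->] [h ->]; exists (g + h); rewrite evD.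
- by move=> _ [g ->]; exists (- g); rewrite /ev rmorphN hornerN.
- by move=> _ _ [g ->] [h ->]; exists (g * h); rewrite evM.
- by move=> [g /esym]; apply: Hb.
Qed.

Lemma exists_max : exists O, good O /\ forall S, good S -> O `<=` S -> S `<=` O.
Proof.
pose P := fun X : set K => X = set0 \/ good X.
have memP X z : P X -> X z -> good X.
  by move=> [->|//] //.
have [A [PA Amax]] : exists A, P A /\ forall B, A `<` B -> ~ P B.
  apply: Zorn_bigcup => Fam FP tot.
  have [[X0 FX0 gX0]|nog] := pselect (exists2 X, Fam X & good X); last first.
    left; apply/seteqP; split => // z [X FX Xz].
    by exfalso; apply: nog; exists X => //; apply: memP (FP _ FX) Xz.
  right; split.
  - by move=> g; exists X0 => //; case: gX0.
  - move=> a b [X1 F1 a1] [X2 F2 b2].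
    have g1 := memP _ _ (FP _ F1) a1; have g2 := memP _ _ (FP _ F2) b2.
    case: (tot _ _ F1 F2) => sub.
    + by exists X2 => //; case: g2 => _ hD _ _ _; apply: hD => //; apply: sub.
    + by exists X1 => //; case: g1 => _ hD _ _ _; apply: hD => //; apply: sub.
  - move=> a [X1 F1 a1]; have g1 := memP _ _ (FP _ F1) a1.
    by exists X1 => //; case: g1 => _ _ hN _ _; apply: hN.
  - move=> a b [X1 F1 a1] [X2 F2 b2].
    have g1 := memP _ _ (FP _ F1) a1; have g2 := memP _ _ (FP _ F2) b2.
    case: (tot _ _ F1 F2) => sub.
    + by exists X2 => //; case: g2 => _ _ _ hM _; apply: hM => //; apply: sub.
    + by exists X1 => //; case: g1 => _ _ _ hM _; apply: hM => //; apply: sub.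
  - move=> [X1 F1 a1]; have g1 := memP _ _ (FP _ F1) a1.
    by case: g1 => _ _ _ _; apply.
have gA : good A.
  case: PA => // A0; exfalso; apply: (Amax _ _ (or_intror base_good)).
  rewrite A0; split => // h; have := h 0; rewrite /set0 /=; apply.
  by exists 0; rewrite ev0.
exists A; split => // S gS AS z Sz.
apply: contrapT => nAz; apply: (Amax S _ (or_intror gS)); split => // SA.
by apply: nAz; apply: SA.
Qed.
End Zorn.



End M2.
Import M2.

Module M3.
Section Val.
Local Open Scope classical_set_scope.
Variables (F : finFieldType) (K : fieldType) (iota : {rmorphism F -> K}).
Variables (x y : K).
Hypothesis hxy : x * y = 1.
Variable O : set K.
Hypothesis gO : good iota x y O.
Hypothesis Omax : forall S, good iota x y S -> O `<=` S -> S `<=` O.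

Lemma Oev g : O (ev iota g y). Proof. by case: gO. Qed.
Lemma OD a b : O a -> O b -> O (a + b). Proof. by case: gO => _ h _ _ _; apply: h. Qed.
Lemma ON a : O a -> O (- a). Proof. by case: gO => _ _ h _ _; apply: h. Qed.
Lemma OM a b : O a -> O b -> O (a * b). Proof. by case: gO => _ _ _ h _; apply: h. Qed.
Lemma Ox : ~ O x. Proof. by case: gO. Qed.
Lemma O0 : O 0. Proof. by have := Oev 0; rewrite ev0. Qed.
Lemma O1 : O 1. Proof. by have := Oev 1; rewrite ev1. Qed.
Lemma Oy : O y. Proof. by have := Oev 'X; rewrite /ev map_polyX hornerX. Qed.
Lemma Oiota c : O (iota c). Proof. by have := Oev c%:P; rewrite /ev map_polyC hornerC. Qed.
Lemma OB a b : O a -> O b -> O (a - b). Proof. by move=> ha hb; apply: OD => //; apply: ON. Qed.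
Lemma OX a n : O a -> O (a ^+ n).
Proof. by move=> ha; elim: n => [|n IH]; [rewrite expr0; apply: O1 | rewrite exprS; apply: OM]. Qed.
Lemma Osum (I : finType) (P : pred I) (f : I -> K) :
  (forall i, P i -> O (f i)) -> O (\sum_(i | P i) f i).
Proof. by move=> h; apply: (big_ind O O0 OD). Qed.

Lemma y_neq0 : y != 0.
Proof. by apply/eqP => y0; move: hxy; rewrite y0 mulr0 => /eqP; rewrite eq_sym oner_eq0. Qed.

Lemma noRel1 w : O w -> 1 = y * w -> False.
Proof. by move=> ow h; apply: Ox; have -> : x = w by rewrite -[x]mulr1 h mulrA hxy mul1r. Qed.

Definition Rel z n := exists a : nat -> K, (forall i, O (a i)) /\
  1 = y * \sum_(i < n) a i * z ^+ i.

Lemma adjoin z : O z \/ exists n, Rel z n.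
Proof.
have [h|h] := pselect (exists n, Rel z n); [by right | left].
pose S := fun u => exists p : {poly K}, (forall i, O p`_i) /\ u = p.[z].
have gS : good iota x y S.
  split.
  - move=> g; exists (ev iota g y)%:P; split; last by rewrite hornerC.
    by move=> i; rewrite coefC; case: eqP => _; [apply: Oev | apply: O0].
  - move=> _ _ [p [hp ->]] [q [hq ->]]; exists (p + q); split; last by rewrite hornerD.
    by move=> i; rewrite coefD; apply: OD.
  - move=> _ [p [hp ->]]; exists (- p); split; last by rewrite hornerN.
    by move=> i; rewrite coefN; apply: ON.
  - move=> _ _ [p [hp ->]] [q [hq ->]]; exists (p * q); split; last by rewrite hornerM.
    by move=> i; rewrite coefM; apply: Osum => j _; apply: OM.
  - move=> [p [hp hx]]; apply: h; exists (size p), (fun i => p`_i); split => //.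
    by rewrite -horner_coef -hx mulrC hxy.
have OS : O `<=` S.
  move=> u ou; exists u%:P; split; last by rewrite hornerC.
  by move=> i; rewrite coefC; case: eqP => _ //; apply: O0.
apply: (Omax gS OS); exists 'X; split; last by rewrite hornerX.
by move=> i; rewrite coefX; case: (i == 1)%N; [apply: O1 | apply: O0].
Qed.

Lemma pow_lemma r n : O r -> exists r', O r' /\ (1 - y * r) ^+ n = 1 - y * r'.
Proof.
move=> hr; elim: n => [|n [r' [hr' e]]].
  by exists 0; split; [apply: O0 | rewrite expr0 mulr0 subr0].
exists (r + r' - y * r * r'); split.
  by apply: OB; [apply: OD | apply: OM; [apply: OM; [apply: Oy|]|]].
by rewrite exprS e; ring.
Qed.

Lemma unit_lemma r : O r -> (1 - y * r) != 0 /\ O ((1 - y * r)^-1).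
Proof.
move=> hr; set u := 1 - y * r.
have u0 : u != 0.
  apply/eqP => /eqP; rewrite subr_eq0 => /eqP h; exact: noRel1 hr h.
split => //; case: (adjoin u^-1) => // -[n [a [ha e]]].
have [r' [hr' er]] := pow_lemma n hr.
exfalso; apply: (@noRel1 (\sum_(i < n) a i * u ^+ (n - i) + r')).
  by apply: OD => //; apply: Osum => i _; apply: OM => //; apply: OX; apply: OB; [apply: O1|apply: OM; [apply: Oy|]].
have : u ^+ n = y * \sum_(i < n) a i * u ^+ (n - i).
  rewrite -[u ^+ n]mul1r e -mulrA mulr_suml; congr (_ * _); apply: eq_bigr => i _.
  rewrite -mulrA; congr (_ * _); rewrite exprVn.
  have hi : (i <= n)%N by apply: ltnW.
  have -> : u ^+ n = u ^+ (n - i) * u ^+ i by rewrite -exprD subnK.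
  by rewrite mulrCA mulVf ?mulr1 // expf_neq0.
rewrite er => h; rewrite mulrDr -h; ring.
Qed.

Lemma Rel_pad z n k : Rel z n -> (n <= k)%N -> Rel z k.
Proof.
move=> [a [ha e]] nk; exists (fun i => if (i < n)%N then a i else 0); split.
  by move=> i; case: ifP => _ //; apply: O0.
rewrite e (big_ord_widen _ (fun i => a i * z ^+ i) nk) big_mkcond /=.
by congr (_ * _); apply: eq_bigr => i _; case: ifP => _ //; rewrite mul0r.
Qed.

Lemma Rel_small z n : Rel z n -> (n <= 1)%N -> False.
Proof.
move=> h n1; have [a [ha e]] := Rel_pad h n1.
by apply: (noRel1 (ha 0%N)); rewrite e big_ord_recl big_ord0 addr0 expr0 mulr1.
Qed.

Lemma reduce z z' n : z * z' = 1 -> Rel z n.+2 -> Rel z' n.+2 -> Rel z n.+1.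
Proof.
move=> zz [a [ha ea]] [b [hb eb]].
set N := n.+1.
have [u0 hu] := unit_lemma (hb 0%N).
set u := 1 - y * b 0%N in u0 hu.
pose c i := u^-1 * y * b (N - i)%N.
have hc i : O (c i) by apply: OM; [apply: OM => //; apply: Oy|].
have eN : z ^+ N = \sum_(i < N) c i * z ^+ i.
  have e1 : z ^+ N = y * \sum_(j < N.+1) b j * z ^+ (N - j).
    rewrite -[z ^+ N]mulr1 eb mulrCA mulr_sumr; congr (_ * _); apply: eq_bigr => j _.
    rewrite mulrCA; congr (_ * _).
    have hj : (j <= N)%N by rewrite -ltnS.
    have -> : z ^+ N = z ^+ (N - j) * z ^+ j by rewrite -exprD subnK.
    by rewrite -mulrA -exprMn zz expr1n mulr1.
  move: e1; rewrite big_ord_recl subn0 /= mulrDr.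
  move=> e1.
  have e2 : u * z ^+ N = y * \sum_(i < N) b (bump 0 i) * z ^+ (N - bump 0 i).
    move: e1; set S := \sum_(i < N) _ => e1.
    by rewrite /u mulrBl mul1r {1}e1; ring.
  have -> : z ^+ N = u^-1 * (y * \sum_(i < N) b (bump 0 i) * z ^+ (N - bump 0 i)).
    by rewrite -e2 mulrA mulVf ?mul1r.
  rewrite mulr_sumr mulr_sumr (reindex_inj rev_ord_inj) /=.
  apply: eq_bigr => i _; rewrite /c /bump /= add1n.
  have hi : (i < N)%N by [].
  rewrite !mulrA; congr (_ * _ * z ^+ _).
    by congr b; lia.
  by lia.
exists (fun i => a i + a N * c i); split.
  by move=> i; apply: OD => //; apply: OM.
rewrite ea big_ord_recr /= eN mulr_sumr -big_split /=.
by congr (_ * _); apply: eq_bigr => i _; rewrite mulrDl mulrA.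
Qed.

Lemma no_both_rel N : forall z z' n k, z * z' = 1 -> (n + k <= N)%N ->
  Rel z n -> Rel z' k -> False.
Proof.
elim: N => [|N IH] z z' n k zz nk hz hz'.
  by apply: (Rel_small hz); lia.
wlog kn : z z' n k zz nk hz hz' / (k <= n)%N.
  move=> W; case: (leqP k n) => h; first exact: W zz nk hz hz' h.
  by apply: (W z' z k n) => //; [rewrite mulrC | lia | apply: ltnW].
case: n kn nk hz => [|[|n]] kn nk hz.
- exact: Rel_small hz _.
- exact: Rel_small hz _.
have hz2 := reduce zz hz (Rel_pad hz' kn).
by apply: (IH z z' n.+1 k) => //; lia.
Qed.

Lemma O_val z : z != 0 -> O z \/ O z^-1.
Proof.
move=> z0; case: (adjoin z) => [|[n hn]]; first by left.
case: (adjoin z^-1) => [|[k hk]]; first by right.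
by exfalso; apply: (@no_both_rel (n + k) z z^-1 n k) => //; rewrite mulfV.
Qed.
End Val.



End M3.
Import M3.

Module M4.
Lemma ex_minP (Q : nat -> Prop) : (exists n, Q n) -> exists n, Q n /\ forall k, Q k -> (n <= k)%N.
Proof.
move=> [n qn]; have H : exists n, `[< Q n >] by exists n; apply/asboolP.
by case: (ex_minnP H) => k /asboolP qk mk; exists k; split => // j /asboolP; apply: mk.
Qed.

Lemma ex_maxP (Q : nat -> Prop) B : (exists n, Q n) -> (forall n, Q n -> (n <= B)%N) ->
  exists n, Q n /\ forall k, Q k -> (k <= n)%N.
Proof.
move=> [n qn] hB; have H : exists n, `[< Q n >] by exists n; apply/asboolP.
have hB' : forall n, `[< Q n >] -> (n <= B)%N by move=> j /asboolP; apply: hB.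
by case: (ex_maxnP H hB') => k /asboolP qk mk; exists k; split => // j /asboolP; apply: mk.
Qed.

Section DVR.
Variables (F : finFieldType) (K : fieldType) (iota : {rmorphism F -> K}).
Variable O : K -> Prop.
Hypothesis O0 : O 0.
Hypothesis O1 : O 1.
Hypothesis OD : forall a b, O a -> O b -> O (a + b).
Hypothesis ON : forall a, O a -> O (- a).
Hypothesis OM : forall a b, O a -> O b -> O (a * b).
Hypothesis Oiota : forall c, O (iota c).
Hypothesis O_val : forall z, z != 0 -> O z \/ O z^-1.
Variables (x y : K).
Hypothesis hxy : x * y = 1.
Hypothesis Ox : ~ O x.
Hypothesis Oy : O y.
Variable t : K.
Hypothesis Ot : O t.
Hypothesis Ht : forall p, ev iota p t = 0 -> p = 0.
Variable m : nat.
Hypothesis HFD : forall zs : 'I_m.+1 -> K, exists g : 'I_m.+1 -> {poly F},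
    (exists i, g i != 0) /\ \sum_i ev iota (g i) t * zs i = 0.

Definition P z := O z /\ (z = 0 \/ ~ O z^-1).

Lemma OB a b : O a -> O b -> O (a - b). Proof. by move=> ha hb; apply: OD => //; apply: ON. Qed.
Lemma OX a n : O a -> O (a ^+ n).
Proof. by move=> ha; elim: n => [|n IH]; [rewrite expr0 | rewrite exprS; apply: OM]. Qed.
Lemma Osum (I : finType) (Q : pred I) (f : I -> K) :
  (forall i, Q i -> O (f i)) -> O (\sum_(i | Q i) f i).
Proof. by move=> h; apply: (big_ind O O0 OD). Qed.
Lemma Oevt g : O (ev iota g t).
Proof.
rewrite /ev horner_coef; apply: Osum => i _; apply: OM; last exact: OX.
by rewrite coef_map; apply: Oiota.
Qed.

Lemma PO z : P z -> O z. Proof. by case. Qed.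
Lemma P0 : P 0. Proof. by split => //; left. Qed.
Lemma PM a b : P a -> O b -> P (a * b).
Proof.
move=> [oa ha] ob; split; first exact: OM.
have [->|a0] := eqVneq a 0; first by left; rewrite mul0r.
have [->|b0] := eqVneq b 0; first by left; rewrite mulr0.
right => h; case: ha => [/eqP|]; first by rewrite (negbTE a0).
apply; have -> : a^-1 = b * (a * b)^-1 by rewrite invfM mulrCA mulfV // mulr1.
exact: OM.
Qed.
Lemma PMl a b : O a -> P b -> P (a * b). Proof. by move=> ha hb; rewrite mulrC; apply: PM. Qed.
Lemma PN a : P a -> P (- a).
Proof. by move=> h; rewrite -mulN1r; apply: PMl => //; apply: ON. Qed.
Lemma PD a b : P a -> P b -> P (a + b).
Proof.
move=> pa pb.
have [->|a0] := eqVneq a 0; first by rewrite add0r.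
have [->|b0] := eqVneq b 0; first by rewrite addr0.
have ab0 : a / b != 0 by rewrite mulf_neq0 ?invr_eq0.
case: (O_val ab0) => h.
  have -> : a + b = b * (a / b + 1) by rewrite mulrDr mulrCA mulfV // mulr1 mulr1.
  by apply: PM => //; apply: OD.
have -> : a + b = a * (1 + b / a) by rewrite mulrDr mulr1 mulrCA mulfV // mulr1.
apply: PM => //; apply: OD => //.
by move: h; rewrite invfM invrK mulrC.
Qed.
Lemma PB a b : P a -> P b -> P (a - b). Proof. by move=> ha hb; apply: PD => //; apply: PN. Qed.
Lemma Psum (I : finType) (Q : pred I) (f : I -> K) :
  (forall i, Q i -> P (f i)) -> P (\sum_(i | Q i) f i).
Proof. by move=> h; apply: (big_ind P P0 PD). Qed.
Lemma P1n : ~ P 1.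
Proof. by case=> _ [/eqP|]; rewrite ?oner_eq0 // invr1. Qed.
Lemma unitP z : O z -> z != 0 -> ~ P z -> O z^-1.
Proof. by move=> oz z0 np; apply: contrapT => h; apply: np; split => //; right. Qed.
Lemma Pinv z : P z -> z != 0 -> ~ O z^-1.
Proof. by move=> [_ [h|//]] z0; rewrite h eqxx in z0. Qed.

Lemma y_neq0 : y != 0.
Proof. by apply/eqP => y0; move: hxy; rewrite y0 mulr0 => /eqP; rewrite eq_sym oner_eq0. Qed.
Lemma xE : x = y^-1.
Proof. by rewrite -[x]mulr1 -(mulfV y_neq0) mulrA hxy mul1r. Qed.
Lemma Py : P y.
Proof. by split => //; right; rewrite -xE. Qed.

Lemma evt_neq0 g : g != 0 -> ev iota g t != 0.
Proof. by move=> g0; apply/eqP => /Ht /eqP; rewrite (negbTE g0). Qed.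

Lemma exists_poly_in_P : exists f : {poly F}, f != 0 /\ P (ev iota f t).
Proof.
apply: contrapT => hno.
have hu g : g != 0 -> ~ P (ev iota g t) by move=> g0 hp; apply: hno; exists g.
have [g [[i0 gi0] e]] := HFD (fun i => x ^+ i).
pose k := [arg max_(i > i0 | g i != 0) (i : nat)].
have [kk gk kmax] : extremum_spec geq (fun i => g i != 0) (fun i : 'I_m.+1 => (i : nat)) k.
  exact: arg_maxnP.
have ek0 := evt_neq0 gk.
have uk : O (ev iota (g kk) t)^-1 := unitP (Oevt _) ek0 (hu _ gk).
apply: P1n.
have e2 : \sum_i (ev iota (g i) t / ev iota (g kk) t) * (x ^+ i * y ^+ kk) = 0.
  have := congr1 (fun z => y ^+ kk / ev iota (g kk) t * z) e.
  rewrite mulr0 mulr_sumr => h; apply: (etrans _ h).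
  by apply: eq_bigr => i _; ring.
rewrite (bigD1 kk) //= mulfV // mul1r -exprMn hxy expr1n in e2.
have -> : 1 = - \sum_(i | i != kk) ev iota (g i) t / ev iota (g kk) t * (x ^+ i * y ^+ kk).
  by apply/eqP; rewrite -addr_eq0 e2.
apply: PN; apply: Psum => i ik.
have [gi0'|gi] := eqVneq (g i) 0.
  by rewrite gi0' ev0 !mul0r; apply: P0.
have lik : (i < kk)%N.
  have := kmax _ gi; rewrite /geq /= => hle; rewrite ltn_neqAle hle andbT.
  by apply: contra ik => /eqP h; apply/eqP/val_inj.

apply: PMl; first by apply: OM => //; apply: Oevt.
have -> : x ^+ i * y ^+ kk = y ^+ (kk - i).
  have -> : y ^+ kk = y ^+ (kk - i) * y ^+ i by rewrite -exprD subnK // ltnW.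
  by rewrite mulrCA -exprMn hxy expr1n mulr1.
have -> : (kk - i = (kk - i.+1).+1)%N by lia.
by rewrite exprS; apply: PM; [apply: Py | apply: OX].
Qed.

Lemma exists_min_f : exists f : {poly F}, [/\ f != 0, P (ev iota f t) &
  forall g, g != 0 -> P (ev iota g t) -> (size f <= size g)%N].
Proof.
have [f0 [f00 Pf0]] := exists_poly_in_P.
have [n [[f [fn0 Pf sf]] mn]] := @ex_minP (fun n => exists g : {poly F}, [/\ g != 0, P (ev iota g t) & size g = n])
  (ex_intro _ (size f0) (ex_intro _ f0 (And3 f00 Pf0 erefl))).
exists f; split => // g g0 Pg; rewrite sf; apply: mn; by exists g.
Qed.

Section WithF.
Variable f : {poly F}.
Hypothesis f0 : f != 0.
Hypothesis Pf : P (ev iota f t).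
Hypothesis fmin : forall g, g != 0 -> P (ev iota g t) -> (size f <= size g)%N.
Let pi := ev iota f t.

Lemma pi0 : pi != 0. Proof. exact: evt_neq0. Qed.

Lemma ideal g : P (ev iota g t) -> f %| g.
Proof.
move=> Pg; apply/modp_eq0P; apply/eqP; apply: contraT => r0.
have Pr : P (ev iota (g %% f) t).
  have -> : ev iota (g %% f) t = ev iota g t - ev iota (g %/ f) t * pi.
    by rewrite /pi {2}(divp_eq g f) evD evM; ring.
  by apply: PB => //; apply: PMl => //; apply: Oevt.
have := fmin r0 Pr; rewrite leqNgt ltn_modp f0 //.
Qed.

Lemma f_size : (1 < size f)%N.
Proof.
rewrite ltnNge; apply/negP => /size1_polyC ef.
have c0 : f`_0 != 0 by apply: contra f0 => /eqP c0; rewrite ef c0.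
have := Pinv Pf pi0; rewrite /pi ef /ev map_polyC hornerC -fmorphV; apply.
exact: Oiota.
Qed.

Definition chain (xs : nat -> K) n := forall i, (i < n)%N ->
  [/\ xs i != 0, P (xs i) & O (pi / xs i)] /\ ((i.+1 < n)%N -> P (xs i / xs i.+1)).

Lemma chain_trans xs n i j : chain xs n -> (i < j)%N -> (j < n)%N -> P (xs i / xs j).
Proof.
move=> ch; elim: j => // j IH ij jn.
have [[xj0 _ _] lj] := ch j (ltnW jn).
have [lt|eq] : (i < j)%N \/ i = j by lia.
  2: by rewrite eq; apply: lj.
have -> : xs i / xs j.+1 = (xs i / xs j) * (xs j / xs j.+1).
  by rewrite mulrA divfK.
by apply: PM; [apply: IH => //; apply: ltnW | apply: PO; apply: lj].
Qed.

Lemma chain_bound xs n : chain xs n -> (n <= m)%N.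
Proof.
move=> ch; rewrite leqNgt; apply/negP => mn.
pose zs (i : 'I_m.+1) := xs i.
have chi (i : 'I_m.+1) : [/\ zs i != 0, P (zs i) & O (pi / zs i)].
  by have [] := ch i (leq_trans (ltn_ord i) mn).
pose Q k := exists g : 'I_m.+1 -> {poly F}, [/\ (exists i, g i != 0),
   \sum_i ev iota (g i) t * zs i = 0 & (\sum_i size (g i) = k)%N].
have [g0 [g0n e0]] := HFD zs.
have [k [[g [[i0 gi0] e sg]] kmin]] := ex_minP (ex_intro Q _ (ex_intro _ g0 (And3 g0n e0 erefl))).
have [j0 nj0] : exists j, ~~ (f %| g j).
  apply: contrapT => hall.
  have dv j : f %| g j by apply: contraT => h; exfalso; apply: hall; exists j.
  pose h j := g j %/ f.
  have gh j : g j = h j * f by rewrite divpK.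
  have hi0 : h i0 != 0 by apply: contra gi0 => /eqP h0; rewrite gh h0 mul0r.
  have eh : \sum_i ev iota (h i) t * zs i = 0.
    apply/eqP; rewrite -(mulIr_eq0 _ (mulIf pi0)).

    rewrite -[X in _ == X]e mulr_suml; apply/eqP; apply: eq_bigr => i _.
    by rewrite gh evM /pi; ring.
  have := kmin (\sum_i size (h i))%N; rewrite -sg => hk.
  have : (\sum_i size (h i) < \sum_i size (g i))%N.
    rewrite (bigD1 i0) //= [X in (_ < X)%N](bigD1 i0) //=.
    rewrite -addSn; apply: leq_add.
      rewrite gh size_mul // -subn1; have := f_size.
      by move=> hf; set a := size _; set b := size f; lia.
    apply: leq_sum => i _; rewrite gh.
    have [->|hi] := eqVneq (h i) 0; first by rewrite mul0r.
    rewrite size_mul // -subn1; have := f_size.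
    by move=> hf; set a := size _; set b := size f; lia.
  by rewrite ltnNge hk //; exists h; split => //; exists i0.
pose j := [arg max_(j > j0 | ~~ (f %| g j)) (j : nat)].
have [jj nj jmax] : extremum_spec geq (fun j => ~~ (f %| g j)) (fun j : 'I_m.+1 => (j : nat)) j.
  exact: arg_maxnP.
have gj0 : g jj != 0 by apply: contra nj => /eqP ->; apply: dvdp0.
have [zj0 _ Opj] := chi jj.
have nPj : ~ P (ev iota (g jj) t) by move=> /ideal; apply/negP.
apply: nPj.
have -> : ev iota (g jj) t = - \sum_(i | i != jj) ev iota (g i) t * (zs i / zs jj).
  have := e; rewrite (bigD1 jj) //= => /eqP; rewrite addr_eq0 => /eqP h.
  rewrite -[LHS](mulfK zj0) h mulNr mulr_suml; congr (- _).
  by apply: eq_bigr => i _; rewrite mulrA.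
apply: PN; apply: Psum => i ij.
case: (ltngtP i jj) => [lt|gt|/val_inj eq]; last by rewrite eq eqxx in ij.
  apply: PMl; first exact: Oevt.
  exact: (chain_trans ch lt (leq_trans (ltn_ord jj) mn)).
have dvi : f %| g i.
  apply: contraT => ndv; have := jmax _ ndv; rewrite /geq /= => hle.
  by move: gt; rewrite ltnNge hle.
rewrite -(divpK dvi) evM.
have -> : ev iota (g i %/ f) t * ev iota f t * (zs i / zs jj) =
          (ev iota (g i %/ f) t * (pi / zs jj)) * zs i by rewrite /pi; ring.
apply: PMl; first by apply: OM => //; apply: Oevt.
by have [] := chi i.
Qed.
Lemma max_chain : exists xs n, [/\ chain xs n, (0 < n)%N &
  forall ys k, chain ys k -> (k <= n)%N].
Proof.
have c1 : chain (fun _ => pi) 1.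
  move=> i i1; split => //; split; [exact: pi0 | exact: Pf | by rewrite mulfV ?pi0].
have [n [[xs cxs] mx]] := @ex_maxP (fun n => exists xs, chain xs n) m
  (ex_intro _ 1%N (ex_intro (fun xs => chain xs 1) (fun _ => pi) c1)) (fun n (h : exists xs, chain xs n) => match h with ex_intro xs c => chain_bound c end).
exists xs, n; split => //.
  by have := mx 1%N (ex_intro (fun xs => chain xs 1) (fun _ => pi) c1).
by move=> ys k cy; apply: mx; exists ys.
Qed.

Definition U w := [/\ w != 0, O w & O w^-1].

Lemma U_P w : U w -> ~ P w.
Proof. by case=> w0 _ ow pw; apply: (Pinv pw w0). Qed.
Lemma UM a b : U a -> U b -> U (a * b).
Proof.
case=> a0 oa oa' [b0 ob ob']; split; [by rewrite mulf_neq0 | by apply: OM |].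
by rewrite invfM; apply: OM.
Qed.
Lemma UV a : U a -> U a^-1.
Proof. by case=> a0 oa oa'; split; rewrite ?invr_eq0 ?invrK. Qed.

Section Tau.
Variables (xs : nat -> K) (n : nat).
Hypothesis cxs : chain xs n.
Hypothesis n0 : (0 < n)%N.
Hypothesis nmax : forall ys k, chain ys k -> (k <= n)%N.
Let tau := xs n.-1.

Lemma tau_props : [/\ tau != 0, P tau & O (pi / tau)].
Proof. have hn : (n.-1 < n)%N by rewrite prednK. by have [] := cxs hn. Qed.
Lemma tau0 : tau != 0. Proof. by case: tau_props. Qed.
Lemma Ptau : P tau. Proof. by case: tau_props. Qed.

Lemma tau_gen z : P z -> O (z / tau).
Proof.
move=> Pz; have [->|z0] := eqVneq z 0; first by rewrite mul0r.
apply: contrapT => nO.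
have Otz : O (tau / z).
  have zt0 : z / tau != 0 by rewrite mulf_neq0 // invr_eq0 tau0.
  by case: (O_val zt0) => // h; move: h; rewrite invfM invrK mulrC.
have [_ Pz' ] := Pz.
pose ys i := if (i < n)%N then xs i else z.
have : chain ys n.+1.
  move=> i iS; rewrite /ys.
  case: (ltnP i n) => [lt|ge].
    have [[h1 h2 h3] h4] := cxs lt; split => // iS'.
    case: (ltnP i.+1 n) => [lt'|ge']; first by apply: h4.
    have ei : i = n.-1 by lia.
    rewrite ei -/tau; split => //; right; rewrite invfM invrK mulrC //.
  have ei : i = n by lia.
  split; last by lia.
  split => //.
  have -> : pi / z = (pi / tau) * (tau / z) by rewrite mulrA divfK ?tau0.
  by apply: OM => //; case: tau_props.
by move=> /nmax; rewrite ltnn.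
Qed.

Lemma pi_fin : exists k, ~ O (pi / tau ^+ k).
Proof.
apply: contrapT => hall.
have hk k : O (pi / tau ^+ k) by apply: contrapT => h; apply: hall; exists k.
pose ys i := tau ^+ (m.+1 - i).
have : chain ys m.+1.
  move=> i im; rewrite /ys; split.
    have -> : (m.+1 - i = (m - i).+1)%N by lia.
    split; [by rewrite expf_neq0 ?tau0 | | exact: hk].
    by rewrite exprS; apply: PM; [exact: Ptau | apply: OX; apply: PO; exact: Ptau].
  move=> im'; have -> : (m.+1 - i = (m.+1 - i.+1).+1)%N by lia.
  by rewrite exprS mulfK ?expf_neq0 ?tau0 //; exact: Ptau.
by move=> /chain_bound; rewrite ltnn.
Qed.

Lemma poly_decomp N (g : {poly F}) : (size g <= N)%N -> g != 0 ->
  exists e g', g = f ^+ e * g' /\ ~~ (f %| g').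
Proof.
elim: N g => [|N IH] g sg g0.
  by move: g0; rewrite -size_poly_eq0; move: sg; rewrite leqn0 => ->.
have [dv|ndv] := boolP (f %| g); last by exists 0%N, g; rewrite expr0 mul1r.
have gd : g = (g %/ f) * f by rewrite divpK.
have q0 : g %/ f != 0 by apply: contra g0 => /eqP q0; rewrite gd q0 mul0r.
have sq : (size (g %/ f)%R <= N)%N.
  move: sg; rewrite {1}gd size_mul // -subn1; have := f_size.
  by move=> hf; set a := size _; set b := size f; lia.
have [e [g' [eq nd]]] := IH _ sq q0.
by exists e.+1, g'; rewrite {1}gd eq exprS; split => //; ring.
Qed.

Lemma O_fin z : O z -> z != 0 -> exists k, ~ O (z / tau ^+ k).
Proof.
move=> Oz z0.
have [g [[j0 gj0] e]] := HFD (fun i => z ^+ i).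
pose i0 := [arg min_(i < j0 | g i != 0) (i : nat)].
have [ii gi imin] : extremum_spec leq (fun j => g j != 0) (fun j : 'I_m.+1 => (j : nat)) i0.
  exact: arg_minnP.
set h := g ii.
have Ohz : O (ev iota h t / z).
  have := e; rewrite (bigD1 ii) //= => /eqP; rewrite addr_eq0 => /eqP eh.
  have -> : ev iota h t / z = - \sum_(i | i != ii) ev iota (g i) t * (z ^+ i / z ^+ ii.+1).
    have -> : - \sum_(i | i != ii) ev iota (g i) t * (z ^+ i / z ^+ ii.+1) =
              (- \sum_(i | i != ii) ev iota (g i) t * z ^+ i) / z ^+ ii.+1.
      by rewrite mulNr mulr_suml; congr (- _); apply: eq_bigr => i _; rewrite mulrA.
    rewrite -eh exprSr; field.
    by rewrite z0 expf_neq0.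
  apply: ON; apply: Osum => i ii'.
  have [->|gi0] := eqVneq (g i) 0; first by rewrite ev0 mul0r.
  have lt : (ii < i)%N.
    by rewrite ltn_neqAle (imin _ gi0) andbT; apply: contra ii' => /eqP h'; apply/eqP/val_inj.
  apply: OM; first exact: Oevt.
  have -> : z ^+ i = z ^+ (i - ii.+1) * z ^+ ii.+1 by rewrite -exprD subnK.
  by rewrite mulfK ?expf_neq0 //; apply: OX.
have [e' [h' [eh nd]]] := poly_decomp (leqnn (size h)) gi.
have eh0 : ev iota h' t != 0.
  by apply: evt_neq0; apply: contra nd => /eqP ->; apply: dvdp0.
have Uh' : O (ev iota h' t)^-1.
  by apply: unitP; [exact: Oevt | exact: eh0 | move=> /ideal; apply/negP].
have [k0 nk0] := pi_fin.
have Ok0 : O (tau ^+ k0 / pi).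
  have pt0 : pi / tau ^+ k0 != 0 by rewrite mulf_neq0 ?invr_eq0 ?expf_neq0 ?pi0 ?tau0.
  by case: (O_val pt0) => // hh; move: hh; rewrite invfM invrK mulrC.
apply: contrapT => hall.
have hk k : O (z / tau ^+ k) by apply: contrapT => hh; apply: hall; exists k.
have := Pinv Ptau tau0; apply.
have -> : tau^-1 = (ev iota h t / z) * (z / tau ^+ (k0 * e' + 1)) *
                   (tau ^+ k0 / pi) ^+ e' * (ev iota h' t)^-1.
  rewrite eh evM ev_exp -/pi exprD exprM expr1 exprMn exprVn.
  by field; rewrite ?pi0 ?tau0 ?eh0 ?z0 ?expf_neq0 ?pi0 ?tau0.
by apply: OM => //; apply: OM; [apply: OM => // | apply: OX].
Qed.

Lemma exprz_nat (a : K) (k : nat) : a ^ (k%:Z) = a ^+ k. Proof. by []. Qed.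

Lemma decomp_O z : O z -> z != 0 -> exists k : nat, U (z / tau ^+ k).
Proof.
move=> Oz z0; have [k [nk kmin]] := ex_minP (O_fin Oz z0).
case: k nk kmin => [|k] nk kmin.
  by exfalso; apply: nk; rewrite expr0 invr1 mulr1.
have Ok : O (z / tau ^+ k).
  by apply: contrapT => h; have := kmin _ h; rewrite ltnn.
exists k; split => //.
  by rewrite mulf_neq0 // invr_eq0 expf_neq0 // tau0.
apply: unitP => //; first by rewrite mulf_neq0 // invr_eq0 expf_neq0 // tau0.
move=> /tau_gen h; apply: nk; move: h; by rewrite exprSr invfM mulrA.
Qed.

Lemma decomp z : z != 0 -> exists n : int, U (z / tau ^ n).
Proof.
move=> z0; case: (O_val z0) => Oz.
  by have [k hk] := decomp_O Oz z0; exists k%:Z; rewrite exprz_nat.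
have z0i : z^-1 != 0 by rewrite invr_eq0.
have [k hk] := decomp_O Oz z0i.
exists (- k%:Z); have := UV hk.
by rewrite -invr_expz exprz_nat invfM !invrK.
Qed.

Lemma U_tau (j : int) : U (tau ^ j) -> j = 0.
Proof.
have Ptk k : P (tau ^+ k.+1) by rewrite exprS; apply: PM; [exact: Ptau | apply: OX; apply: PO; exact: Ptau].
case: j => [[|k]|k] // h; exfalso.
  by apply: (U_P h); rewrite exprz_nat; apply: Ptk.
have := UV h; rewrite NegzE -invr_expz invrK exprz_nat => h'.
by apply: (U_P h'); apply: Ptk.
Qed.

Lemma decomp_uniq z a b : U (z / tau ^ a) -> U (z / tau ^ b) -> a = b.
Proof.
move=> ha hb.
have z0 : z != 0 by case: ha => h _ _; apply: contra h => /eqP ->; rewrite mul0r.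
have := UM hb (UV ha).
have -> : z / tau ^ b * (z / tau ^ a)^-1 = tau ^ (a - b).
  rewrite expfzDr ?tau0 // -invr_expz invfM invrK; field.
  by rewrite z0 expfz_neq0 ?tau0.
by move=> /U_tau /eqP; rewrite subr_eq0 => /eqP.
Qed.

Definition vv (z : K) : int :=
  match pselect (exists j : int, z != 0 /\ U (z / tau ^ j)) with
  | left h => projT1 (cid h)
  | right _ => 0
  end.

Lemma vvP z : z != 0 -> U (z / tau ^ vv z).
Proof.
move=> z0; rewrite /vv; case: pselect => [h|h].
  by case: (cid h) => /= j [].
by exfalso; apply: h; have [j hj] := decomp z0; exists j.
Qed.

Lemma vv_uniq z j : z != 0 -> U (z / tau ^ j) -> vv z = j.
Proof. by move=> z0 h; apply: decomp_uniq (vvP z0) h. Qed.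

Lemma vv_ge z a : z != 0 -> O (z / tau ^ a) -> a <= vv z.
Proof.
move=> z0 Oa; rewrite leNgt; apply/negP => lt.
have hU := vvP z0.
have : P (z / tau ^ vv z).
  have -> : z / tau ^ vv z = (z / tau ^ a) * tau ^ (a - vv z).
    rewrite expfzDr ?tau0 // -invr_expz; field.
    by rewrite !expfz_neq0 ?tau0.
  apply: PMl => //.
  have : 0 < a - vv z by rewrite subr_gt0.
  case: (a - vv z) => [[|k]|k] //= _.
  by rewrite exprz_nat exprS; apply: PM; [exact: Ptau | apply: OX; apply: PO; exact: Ptau].
exact: U_P.
Qed.

Lemma O_tau_pos (k : int) : 0 <= k -> O (tau ^ k).
Proof. by case: k => // k _; rewrite exprz_nat; apply: OX; apply: PO; exact: Ptau. Qed.

Lemma vv_place : is_place iota vv.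
Proof.
split; [|split; [|split]].
- move=> a b a0 b0; apply: vv_uniq; first by rewrite mulf_neq0.
  have -> : a * b / tau ^ (vv a + vv b) = (a / tau ^ vv a) * (b / tau ^ vv b).
    by rewrite expfzDr ?tau0 // invfM; ring.
  by apply: UM; apply: vvP.
- move=> a b a0 b0 ab0.
  wlog le : a b a0 b0 ab0 / vv a <= vv b.
    move=> W; case: (boolP (vv a <= vv b)) => h; first exact: W.
    have ba0 : b + a != 0 by rewrite addrC.
    have h' : vv b <= vv a by rewrite ltW // ltNge.
    by have := W b a b0 a0 ba0 h'; rewrite addrC minC.
  rewrite (min_idPl le); apply: vv_ge => //.
  have -> : (a + b) / tau ^ vv a = a / tau ^ vv a + (b / tau ^ vv b) * tau ^ (vv b - vv a).
    rewrite expfzDr ?tau0 // -invr_expz; field.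
    by rewrite !expfz_neq0 ?tau0.
  apply: OD; first by case: (vvP a0).
  apply: OM; first by case: (vvP b0).
  by apply: O_tau_pos; rewrite subr_ge0.
- move=> c c0; apply: vv_uniq; first by rewrite fmorph_eq0.
  rewrite expr0z invr1 mulr1; split; [by rewrite fmorph_eq0 | exact: Oiota |].
  by rewrite -fmorphV; apply: Oiota.
- move=> k; exists (tau ^ k); split; first by rewrite expfz_neq0 ?tau0.
  apply: vv_uniq; first by rewrite expfz_neq0 ?tau0.
  rewrite mulfV ?expfz_neq0 ?tau0 //; split; rewrite ?invr1 ?oner_eq0 //.
Qed.

Lemma vv_x : vv x < 0.
Proof.
have x0 : x != 0 by apply/eqP => x0; move: hxy; rewrite x0 mul0r => /eqP; rewrite eq_sym oner_eq0.
rewrite ltNge; apply/negP => h; apply: Ox.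
have -> : x = (x / tau ^ vv x) * tau ^ vv x by rewrite divfK ?expfz_neq0 ?tau0.
by apply: OM; [case: (vvP x0) | apply: O_tau_pos].
Qed.

End Tau.

Lemma exists_place_f : exists v, is_place iota v /\ v x < 0.
Proof.
have [xs [n [c n0 mx]]] := max_chain.
by exists (vv xs n); split; [exact: vv_place c n0 mx | exact: vv_x c n0 mx].
Qed.
End WithF.

Lemma exists_place : exists v, is_place iota v /\ v x < 0.
Proof. by have [f [f0 Pf fmin]] := exists_min_f; exact: exists_place_f f0 Pf fmin. Qed.


End DVR.



End M4.
Import M4.

Module M5.
Section Inv.
Variables (F : finFieldType) (K : fieldType) (iota : {rmorphism F -> K}).

Definition revp (D : nat) (p : {poly F}) := \poly_(k < D) p`_(D.-1 - k).

Lemma ev_revp (p : {poly F}) D (z : K) : z != 0 -> (size p <= D)%N ->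
  ev iota p z = z ^+ D.-1 * ev iota (revp D p) z^-1.
Proof.
move=> z0 sp; rewrite /ev (@horner_coef_wide _ D) ?size_map_poly //.
rewrite (@horner_coef_wide _ D); last first.
  by rewrite size_map_poly /revp; apply: size_poly.
rewrite mulr_sumr (reindex_inj rev_ord_inj) /=; apply: eq_bigr => k _.
rewrite !coef_map coef_poly /=.
have hk := ltn_ord k.
rewrite hk -subn1.
have -> : (D - 1 - k = D - k.+1)%N by lia.
rewrite mulrCA; congr (_ * _).
have -> : (D - 1 = (D - k.+1) + k)%N by lia.
by rewrite exprD exprVn -mulrA mulfV ?mulr1 // expf_neq0.
Qed.

Variables (t : K) (m : nat).
Hypothesis t0 : t != 0.
Hypothesis Ht : forall p, ev iota p t = 0 -> p = 0.
Hypothesis HFD : forall zs : 'I_m.+1 -> K, exists g : 'I_m.+1 -> {poly F},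
    (exists i, g i != 0) /\ \sum_i ev iota (g i) t * zs i = 0.

Lemma Ht_inv p : ev iota p t^-1 = 0 -> p = 0.
Proof.
move=> e; have ti0 : t^-1 != 0 by rewrite invr_eq0.
have := ev_revp ti0 (leqnn (size p)); rewrite e invrK => /esym /eqP.
rewrite mulf_eq0 expf_eq0 (negbTE ti0) andbF /= => /eqP /Ht r0.
apply/polyP => i; rewrite coef0.
case: (ltnP i (size p)) => hi; last by rewrite nth_default.
have := congr1 (fun q : {poly F} => q`_((size p).-1 - i)%N) r0.
rewrite coef0 coef_poly.
have -> : ((size p).-1 - i < size p)%N by lia.
by have -> : ((size p).-1 - ((size p).-1 - i) = i)%N by lia.
Qed.

Lemma FD_inv (zs : 'I_m.+1 -> K) : exists g : 'I_m.+1 -> {poly F},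
    (exists i, g i != 0) /\ \sum_i ev iota (g i) t^-1 * zs i = 0.
Proof.
have [g [[i0 gi0] e]] := HFD zs.
pose D := (\max_i size (g i))%N.
have sD i : (size (g i) <= D)%N by rewrite /D; apply: (@leq_bigmax _ (fun j => size (g j))).
exists (fun i => revp D (g i)); split.
  exists i0; apply: contra gi0 => /eqP r0; apply/eqP; apply: Ht.
  by rewrite (ev_revp t0 (sD i0)) r0 ev0 mulr0.
apply/eqP; rewrite -(mulrI_eq0 _ (mulfI (expf_neq0 D.-1 t0))) mulr_sumr.
rewrite -[X in _ == X]e; apply/eqP; apply: eq_bigr => i _.
by rewrite (ev_revp t0 (sD i)) mulrA.
Qed.
End Inv.



End M5.
Import M5.

Module M6.
Lemma pole_exists (F : finFieldType) (K : fieldType) (iota : {rmorphism F -> K}) (x : K) :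
  is_function_field iota -> ~ (exists c, x = iota c) ->
  exists v, is_place iota v /\ v x < 0.
Proof.
move=> [Halg [t [Ht [s Hs]]]] nc.
have x0 : x != 0 by apply/eqP => x0; apply: nc; exists 0; rewrite rmorph0.
pose y := x^-1.
have hxy : x * y = 1 by rewrite mulfV.
have Hb : forall g, ev iota g y <> x.
  move=> g eg; apply: nc.
  have [c yc] : exists c, y = iota c.
    apply: Halg; exists ('X * g - 1); split.
      apply/eqP => /(congr1 (fun q : {poly F} => q`_0)).
      by rewrite coefB coefXM coef1 coef0 /= sub0r => /eqP; rewrite oppr_eq0 oner_eq0.
    by rewrite /root rmorphB rmorphM /= map_polyX rmorph1 hornerD hornerN hornerM hornerX hornerC -/(ev iota g y) eg mulrC hxy subrr.
  by exists c^-1; rewrite fmorphV -yc invrK.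
have [O [gO Omax]] := exists_max Hb.
have Oval := O_val hxy gO Omax.
have HtE : forall p, ev iota p t = 0 -> p = 0 by [].
have HFD := FD Hs.
have Ox := Ox gO.
case: (pselect (O t)) => Ot.
  exact: (@exists_place F K iota O (O0 gO) (O1 gO) (OD gO) (ON gO) (OM gO) (Oiota gO) Oval
    x y hxy Ox (Oy gO) t Ot HtE (size s) HFD).
have t0 : t != 0 by apply: contra_notN Ot => /eqP ->; apply: O0 gO.
have Oti : O t^-1 by case: (Oval _ t0).
exact: (@exists_place F K iota O (O0 gO) (O1 gO) (OD gO) (ON gO) (OM gO) (Oiota gO) Oval
    x y hxy Ox (Oy gO) t^-1 Oti (Ht_inv t0 HtE) (size s) (FD_inv t0 HtE HFD)).
Qed.


End M6.
Import M6.

Lemma pole_at_w (F : finFieldType) (K : fieldType) (iota : {rmorphism F -> K})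
    (w : K -> int) (x : K) :
  is_function_field iota -> is_place iota w -> in_Rw_nonconst iota w x -> w x < 0.
Proof.
move=> hf hw [[x0|hR] nc].
  by exfalso; apply: nc; exists 0; rewrite x0 rmorph0.
rewrite ltNge; apply/negP => wx.
have [v [pv vx]] := pole_exists hf nc.
have xn0 : x != 0 by apply/eqP => x0; apply: nc; exists 0; rewrite x0 rmorph0.
have : 0 <= v x.
  apply: (hR v pv); exists x; split => //; apply/eqP => e.
  by move: vx; rewrite e ltNge wx.
by rewrite leNgt vx.
Qed.

Unset Implicit Arguments.

Section Red.
Variables (F : finFieldType) (K : fieldType) (iota : {rmorphism F -> K}) (w : K -> int).
Hypothesis hw : is_place iota w.

Lemma w1 : w 1 = 0.
Proof.
case: hw => hm _. have := hm 1 1 (oner_neq0 K) (oner_neq0 K).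
rewrite mulr1 => h; lia.
Qed.

Lemma wN1 : w (-1) = 0.
Proof.
case: hw => hm _. have h1 : (-1 : K) != 0 by rewrite oppr_eq0 oner_neq0.
have := hm _ _ h1 h1. rewrite mulrNN mulr1 w1 => h; lia.
Qed.

Lemma wN x : x != 0 -> w (- x) = w x.
Proof.
move=> x0; case: hw => hm _.
have h1 : (-1 : K) != 0 by rewrite oppr_eq0 oner_neq0.
by rewrite -mulN1r hm // wN1 add0r.
Qed.

Lemma wM x y : x != 0 -> y != 0 -> w (x * y) = w x + w y.
Proof. by case: hw => hm _; apply: hm. Qed.

Lemma w_strict x y : x != 0 -> y != 0 -> x + y != 0 -> w x < w y -> w (x + y) = w x.
Proof.
move=> x0 y0 xy0 lt; case: hw => _ [hu _].
have h1 := hu _ _ x0 y0 xy0.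
have hy : - y != 0 by rewrite oppr_eq0.
have h2 := hu _ _ xy0 hy; rewrite addrK in h2.
move: (h2 x0) h1; rewrite wN // => h2' h1.
have ltm : Num.min (w x) (w y) = w x by apply/min_idPl; apply: ltW.
rewrite ltm in h1.
apply/eqP; rewrite eq_le h1 andbT.
move: h2'; rewrite /Order.min; case: ifP => // _ /(lt_le_trans lt); by rewrite ltxx.
Qed.
End Red.

Theorem lemma2p1 (F : finFieldType) (K : fieldType) (iota : {rmorphism F -> K})
    (w : K -> int) (qw : nat) (a b c d : K) :
  is_function_field iota ->
  is_place iota w ->
  residue_card w qw ->
  in_Rw_nonconst iota w a -> in_Rw_nonconst iota w b ->
  in_Rw_nonconst iota w c -> in_Rw_nonconst iota w d ->
  a * d - b * c = 1 ->
  absv w qw b <= absv w qw a ->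
  absv w qw d <= absv w qw c.
Proof.
move=> hf hw hr ha hb hc hd hdet hab.
have nz x : in_Rw_nonconst iota w x -> x != 0.
  by move=> [_ hx]; apply/eqP => x0; apply: hx; exists 0; rewrite rmorph0.
have a0 := nz _ ha; have b0 := nz _ hb; have c0 := nz _ hc; have d0 := nz _ hd.
have pa := @pole_at_w F K iota w a hf hw ha; have pd := @pole_at_w F K iota w d hf hw hd.
case: hr => s [_ [_ [_ hcov]]].
have qw0 : (0 < qw)%N.
  have [i ilt _] := hcov 0 (or_introl erefl); exact: leq_ltn_trans ilt.
move: hab; rewrite /absv (negbTE a0) (negbTE b0) (negbTE c0) (negbTE d0).
clear hcov; case: qw qw0 => // [[|q]] _.
  by rewrite !exp1rz.
have q1 : (1 : rat) < (q.+2)%:R by rewrite ltr1n.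
rewrite !ler_eXz2l // !lerN2 => hab.
rewrite leNgt; apply/negP => hdc.
have ad0 : a * d != 0 by rewrite mulf_neq0.
have bc0 : - (b * c) != 0 by rewrite oppr_eq0 mulf_neq0.
have h10 : a * d + - (b * c) != 0 by rewrite hdet oner_neq0.
have := @w_strict F K iota w hw _ _ ad0 bc0 h10.
rewrite hdet (@w1 F K iota w hw) (@wN F K iota w hw) ?mulf_neq0 // !(@wM F K iota w hw) //.
move=> h; have := h ltac:(lia). lia.
Qed.
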